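(* For every integer $s\ge4$, $F_{s,5}(x)=\frac{1}{(s-1)!}\bigl(x^2-(12s-5)x+12s^2\bigr)(x-2s)\prod_{p=5}^{s}(x-p)$ (an empty product equals $1$).
   Context: For an integer $j\ge0$, $\binom{x}{j}=x(x-1)\cdots(x-j+1)/j!$ as a polynomial in $x$, and $\binom{x}{j}=0$ for $j<0$. For integers $s\ge1$, $k\ge1$, the Moser polynomial is $F_{s,k}(x)=\sum_{p=1}^{s}(-1)^{p-1}p^{k-1}\binom{x}{s-p}$. *)

(* Defs.v *)
From HB Require Import structures.
From mathcomp Require Import all_boot all_order all_algebra.
Set Implicit Arguments. Unset Strict Implicit. Unset Printing Implicit Defensive.
Import Order.TTheory GRing.Theory Num.Theory.
Local Open Scope ring_scope.

Definition binom_poly (j : nat) : {poly rat} :=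
  ((j`!)%:R)^-1 *: \prod_(i < j) ('X - (i%:R)%:P).

(* Moser polynomial F_{s,k}(x) = sum_{p=1}^s (-1)^(p-1) p^(k-1) binom(x, s-p) *)
Definition moser_poly (s k : nat) : {poly rat} :=
  \sum_(1 <= p < s.+1) ((-1) ^+ (p - 1) * (p%:R) ^+ (k - 1)) *: binom_poly (s - p).

(* Main.v *)
Require Import Defs.
From HB Require Import structures.
From mathcomp Require Import all_boot all_order all_algebra.
From mathcomp Require Import ring lra zify.
Import Order.TTheory GRing.Theory Num.Theory.
Local Open Scope ring_scope.

Definition B (j : nat) (x : rat) : rat := ((j`!)%:R)^-1 * \prod_(i < j) (x - i%:R).

Lemma hornerB j x : (binom_poly j).[x] = B j x.
Proof.
rewrite /binom_poly hornerZ horner_prod /B; congr (_ * _).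
by apply: eq_bigr => i _; rewrite hornerXsubC.
Qed.

Lemma B0 x : B 0 x = 1.
Proof. by rewrite /B big_ord0 fact0 invr1 mulr1. Qed.

Lemma BZ j : B j.+1 0 = 0.
Proof. by rewrite /B big_ord_recl /= subr0 mul0r mulr0. Qed.

Lemma fact_neq0 j : ((j`!)%:R : rat) != 0.
Proof. by rewrite pnatr_eq0 -lt0n fact_gt0. Qed.

Lemma BS j x : B j.+1 (x + 1) = B j.+1 x + B j x.
Proof.
rewrite /B big_ord_recl big_ord_recr /=.
have -> : \prod_(i < j) (x + 1 - (lift ord0 i)%:R) = \prod_(i < j) (x - i%:R).
  by apply: eq_bigr => i _; rewrite lift0 -addn1 natrD; ring.
rewrite factS natrM.
have := fact_neq0 j => h.
field; rewrite h /= nat1r pnatr_eq0 //.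
Qed.
Definition c (p : nat) : rat := (-1) ^+ (p - 1) * (p%:R) ^+ 4.
Definition f (s : nat) (x : rat) : rat := \sum_(1 <= p < s.+1) c p * B (s - p) x.

Lemma hornerF s x : (moser_poly s 5).[x] = f s x.
Proof.
rewrite /moser_poly horner_sum; apply: eq_bigr => p _.
by rewrite hornerZ hornerB.
Qed.

Lemma fS s x : f s.+1 (x + 1) = f s.+1 x + f s x.
Proof.
rewrite /f big_nat_recr // [in X in _ = X + _]big_nat_recr //= subnn !B0.
rewrite addrAC -big_split /=; congr (_ + _).
apply: eq_big_nat => p /andP[_ hp]; by rewrite subSn // BS mulrDr.
Qed.

Lemma f0 s : f s.+1 0 = c s.+1.
Proof.
rewrite /f big_nat_recr //= subnn B0 mulr1 big1_seq ?add0r //.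
move=> p /andP[_]; rewrite mem_index_iota => /andP[_ hp].
by rewrite subSn // BZ mulr0.
Qed.
Definition q (s : nat) (x : rat) : rat := x ^+ 2 - ((12 * s)%:R - 5) * x + (12 * s ^ 2)%:R.
Definition g (s : nat) (x : rat) : rat :=
  ((s.-1)`!%:R)^-1 * (q s x * (x - (2 * s)%:R) * \prod_(5 <= p < s.+1) (x - p%:R)).

Lemma gS u x : (3 <= u)%N -> g u.+2 (x + 1) = g u.+2 x + g u.+1 x.
Proof.
move=> hu; rewrite /g /=.
rewrite big_nat_recl; last by lia.
rewrite [in X in _ = X + _]big_nat_recr /=; last by lia.
have -> : \prod_(5 <= i < u.+2) (x + 1 - i.+1%:R) = \prod_(5 <= i < u.+2) (x - i%:R).
  by apply: eq_bigr => i _; rewrite -natr1; ring.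
set Q := \prod_(5 <= i < u.+2) (x - i%:R).
rewrite factS natrM /q !natrM ?natrX -[u.+2]addn2 -[u.+1]addn1 !natrD.
have h := fact_neq0 u.
field; rewrite h /= natr1 pnatr_eq0 //.
Qed.
Lemma f4 x : f 4 x = g 4 x.
Proof.
rewrite /f /g /q /B /c /=.
rewrite big_ltn // big_ltn // big_ltn // big_ltn // !big_geq // !big_ord_recr !big_ord0 /=.
rewrite !factS fact0 /= !expr1n !expr0.
by field.
Qed.

Lemma prod0 u : \prod_(5 <= p < u.+4.+1) (0 - p%:R) = (-1) ^+ u * ((u.+4)`!)%:R / 24 :> rat.
Proof.
elim: u => [|u IH].
  by rewrite big_geq // !factS fact0 /=; field.
rewrite big_nat_recr //= IH (factS u.+4) natrM exprS.
rewrite -[u.+4.+1]addn1 -[u.+4]addn4 !natrD; by field.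
Qed.

Lemma g0 u : g u.+4 0 = c u.+4.
Proof.
rewrite /g /q /c prod0 (factS u.+3) natrM subSS subn0.
rewrite !exprS.
have h := fact_neq0 u.+3.
rewrite [(u.+4 * _)%:R]natrM; change ((u.+4.-1)`!) with ((u.+3)`!); set F := ((u.+3)`!)%:R in h *; clearbody F;  rewrite ?natrM ?natrX; by field.
Qed.

Lemma fg u n : f u.+4 n%:R = g u.+4 n%:R.
Proof.
elim: u n => [|u IHu] n; first exact: f4.
elim: n => [|n IHn]; first by rewrite f0 g0.
by rewrite -natr1 fS gS // IHn IHu.
Qed.

Lemma poly_eq_nat (p r : {poly rat}) : (forall n, p.[n%:R] = r.[n%:R]) -> p = r.
Proof.
move=> h; apply/eqP; rewrite -subr_eq0; apply/eqP.
apply: (@roots_geq_poly_eq0 _ _ [seq i%:R | i <- iota 0 (size (p - r))]).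
- apply/allP => y /mapP [i _ ->]; by rewrite /root hornerD hornerN h subrr.
- rewrite map_inj_uniq ?iota_uniq // => a b /eqP; rewrite eqr_nat => /eqP.
  done.
- by rewrite size_map size_iota.
Qed.

Lemma hornerG (s : nat) (x : rat) :
  (((((s.-1)`!)%:R : rat)^-1) *:
    (('X ^+ 2 - (((12 * s)%:R - 5) : rat) *: 'X + ((12 * s ^ 2)%:R : rat)%:P)
     * ('X - ((2 * s)%:R : rat)%:P)
     * \prod_(5 <= p < s.+1) ('X - ((p%:R : rat))%:P))).[x] = g s x.
Proof.
rewrite /g /q hornerZ !hornerM horner_prod !hornerD ?hornerN ?hornerZ !hornerC hornerXn hornerX.
congr (_ * (_ * _ * _)).
by apply: eq_bigr => i _; rewrite hornerXsubC.
Qed.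

Theorem mainTheorem8 (s : nat) (hs : (4 <= s)%N) :
  moser_poly s 5 =
  ((((s.-1)`!)%:R : rat)^-1) *:
    (('X ^+ 2 - (((12 * s)%:R - 5) : rat) *: 'X + ((12 * s ^ 2)%:R : rat)%:P)
     * ('X - ((2 * s)%:R : rat)%:P)
     * \prod_(5 <= p < s.+1) ('X - ((p%:R : rat))%:P)).
Proof.
apply: poly_eq_nat => n.
rewrite hornerF hornerG.
have [u ->] : exists u, s = u.+4 by exists (s - 4)%N; lia.
exact: fg.
Qed.
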